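(* For every $\mathsf{SKS}$ derivation $\Phi$ there exists an $\mathsf{SKS}$ derivation with the same premiss and conclusion as $\Phi$ whose associated atomic flow is cycle-free.
   Context: Formulae are built from the units $\mathsf f$ and $\mathsf t$, atoms, disjunction $[\alpha\vee\beta]$ and conjunction $(\alpha\wedge\beta)$; on atoms there is an involution $a\mapsto\bar a$ with $\bar a\neq a$. An inference step of a rule $\alpha/\beta$ rewrites $\xi\{\alpha\}$ into $\xi\{\beta\}$ for an arbitrary context (formula with a hole) $\xi$. A derivation from $\alpha$ (premiss) to $\beta$ (conclusion) is a finite chain of steps from $\alpha$ to $\beta$. System $\mathsf{SKS}$: interaction $\mathsf t/[a\vee\bar a]$; weakening $\mathsf f/a$; contraction $[a\vee a]/a$; cut $(a\wedge\bar a)/\mathsf f$; coweakening $a/\mathsf t$; cocontraction $a/(a\wedge a)$; switch $(\alpha\wedge[\beta\vee\gamma])/[(\alpha\wedge\beta)\vee\gamma]$; medial $[(\alpha\wedge\beta)\vee(\gamma\wedge\delta)]/([\alpha\vee\gamma]\wedge[\beta\vee\delta])$; and $\gamma/\delta$ whenever $\gamma=\delta$ is (either direction of) an instance of commutativity or associativity of $\vee,\wedge$, $[\alpha\vee\mathsf f]=\alpha$, $(\alpha\wedge\mathsf t)=\alpha$, $[\mathsf t\vee\mathsf t]=\mathsf t$, $(\mathsf f\wedge\mathsf f)=\mathsf f$. The atomic flow of an $\mathsf{SKS}$ derivation is a finite directed graph with vertices labelled interaction, cut, weakening, coweakening, contraction or cocontraction, and edges that may dangle at the top ($up=\top$) or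 bottom ($lo=\bot$): each atom occurrence is mapped to an edge by tracing occurrences through steps (occurrences in contexts and in the instantiated subformulae of switch, medial, $=$ keep their edge); each step of an atomic rule gives a vertex with that label whose upper edges ($lo(\epsilon)=\nu$) are the redex occurrences in the step's premiss and whose lower edges ($up(\epsilon)=\nu$) are those in its conclusion; occurrences in the premiss (conclusion) of the derivation have $up=\top$ ($lo=\bot$). A path from $\nu$ to $\nu'$ is a sequence of edges $\epsilon_1,\dots,\epsilon_h$ with $lo(\epsilon_i)=up(\epsilon_{i+1})$, $up(\epsilon_1)=\nu$, $lo(\epsilon_h)=\nu'$; its reversal is a path from $\nu'$ to $\nu$. An $\mathsf{ai}$-path from $\nu$ to $\nu'$ is either a path from $\nu$ to $\nu'$ or a sequence $\epsilon_1,\dots,\epsilon_k,\epsilon_{k+1},\dots,\epsilon_h$ with $\epsilon_k\neq\epsilon_{k+1}$ such that, for some interaction or cut vertex $\nu''$, $\epsilon_1,\dots,\epsilon_k$ is an $\mathsf{ai}$-path from $\nu$ to $\nu''$ and $\epsilon_{k+1},\dots,\epsilon_h$ is an $\mathsf{ai}$-path from $\nu''$ to $\nu'$. An $\mathsf{ai}$-cycle is an $\mathsf{ai}$-path from a vertex to itself in which no edge appears twice. A flow is cycle-free if it has no $\mathsf{ai}$-cycle. *)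

(* Defs.v *)
From mathcomp Require Import all_boot.
Set Implicit Arguments. Unset Strict Implicit. Unset Printing Implicit Defensive.

Inductive formula (X : Type) : Type :=
| FF : formula X
| FT : formula X
| FAt : X -> formula X
| FOr : formula X -> formula X -> formula X
| FAnd : formula X -> formula X -> formula X.
Arguments FF {X}. Arguments FT {X}.

Fixpoint fmap (X Y : Type) (f : X -> Y) (p : formula X) : formula Y :=
  match p with
  | FF => FF | FT => FT | FAt x => FAt (f x)
  | FOr p q => FOr (fmap f p) (fmap f q)
  | FAnd p q => FAnd (fmap f p) (fmap f q)
  end.

Fixpoint leaves (X : Type) (p : formula X) : seq X :=
  match p with
  | FF | FT => [::] | FAt x => [:: x]
  | FOr p q | FAnd p q => leaves p ++ leaves q
  end.

Inductive ctx (X : Type) : Type :=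
| Hole : ctx X
| COrL : ctx X -> formula X -> ctx X
| COrR : formula X -> ctx X -> ctx X
| CAndL : ctx X -> formula X -> ctx X
| CAndR : formula X -> ctx X -> ctx X.
Arguments Hole {X}.

Fixpoint plug (X : Type) (c : ctx X) (p : formula X) : formula X :=
  match c with
  | Hole => p
  | COrL c q => FOr (plug c p) q
  | COrR q c => FOr q (plug c p)
  | CAndL c q => FAnd (plug c p) q
  | CAndR q c => FAnd q (plug c p)
  end.

Inductive eqn (X : Type) : formula X -> formula X -> Prop :=
| eq_comm_or a b : eqn (FOr a b) (FOr b a)
| eq_comm_and a b : eqn (FAnd a b) (FAnd b a)
| eq_assoc_or a b c : eqn (FOr (FOr a b) c) (FOr a (FOr b c))
| eq_assoc_and a b c : eqn (FAnd (FAnd a b) c) (FAnd a (FAnd b c))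
| eq_unit_or a : eqn (FOr a FF) a
| eq_unit_and a : eqn (FAnd a FT) a
| eq_tt : eqn (FOr FT FT) FT
| eq_ff : eqn (FAnd FF FF) FF.

Inductive srule (X : Type) : formula X -> formula X -> Prop :=
| sr_switch a b c : srule (FAnd a (FOr b c)) (FOr (FAnd a b) c)
| sr_medial a b c d :
    srule (FOr (FAnd a b) (FAnd c d)) (FAnd (FOr a c) (FOr b d))
| sr_eq_lr a b : eqn a b -> srule a b
| sr_eq_rl a b : eqn a b -> srule b a.

(* Edges of the atomic flow: (0, k) = k-th atom occurrence of the premiss
   (up = top);  (i.+1, k) = k-th lower edge of the vertex created by step i. *)
Definition edge := (nat * nat)%type.
Definition born (i k : nat) : edge := (i.+1, k).

Inductive vlabel : Type :=
| VInt | VCut | VWeak | VCoweak | VContr | VCocontr.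

Definition lformula (A : Type) := formula (A * edge).

(* atomic rules applied at step i; last two indices: vertex label, upper edges *)
Inductive arule (A : Type) (bar : A -> A) (i : nat) :
  lformula A -> lformula A -> vlabel -> seq edge -> Prop :=
| ar_int a : arule bar i FT (FOr (FAt (a, born i 0)) (FAt (bar a, born i 1))) VInt [::]
| ar_weak a : arule bar i FF (FAt (a, born i 0)) VWeak [::]
| ar_contr a e1 e2 :
    arule bar i (FOr (FAt (a, e1)) (FAt (a, e2))) (FAt (a, born i 0)) VContr [:: e1; e2]
| ar_cut a e1 e2 :
    arule bar i (FAnd (FAt (a, e1)) (FAt (bar a, e2))) FF VCut [:: e1; e2]
| ar_coweak a e : arule bar i (FAt (a, e)) FT VCoweak [:: e]
| ar_cocontr a e :
    arule bar i (FAt (a, e)) (FAnd (FAt (a, born i 0)) (FAt (a, born i 1))) VCocontr [:: e].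

(* one inference step (rule in a context), at position i of the derivation;
   None = structural step, Some (l, ups) = atomic step giving a vertex *)
Inductive lstep (A : Type) (bar : A -> A) (i : nat) :
  lformula A -> lformula A -> option (vlabel * seq edge) -> Prop :=
| ls_struct (c : ctx (A * edge)) a b :
    srule a b -> lstep bar i (plug c a) (plug c b) None
| ls_atomic (c : ctx (A * edge)) a b l ups :
    arule bar i a b l ups -> lstep bar i (plug c a) (plug c b) (Some (l, ups)).

Record derivation (A : Type) := Deriv {
  dforms : seq (lformula A);
  dinfo : seq (option (vlabel * seq edge)) }.

Definition erase (A : Type) (p : lformula A) : formula A := fmap fst p.

Definition is_derivation (A : Type) (bar : A -> A) (D : derivation A)
    (x y : formula A) : Prop :=
  size (dforms D) = (size (dinfo D)).+1 /\
  map snd (leaves (head FF (dforms D)))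
    = [seq (0, k) | k <- iota 0 (size (leaves (head FF (dforms D))))] /\
  (forall i, i < size (dinfo D) ->
     lstep bar i (nth FF (dforms D) i) (nth FF (dforms D) i.+1) (nth None (dinfo D) i)) /\
  erase (head FF (dforms D)) = x /\
  erase (last FF (dforms D)) = y.

Inductive node : Type := NTop | NBot | NV of nat.

Definition edges (A : Type) (D : derivation A) : seq edge :=
  flatten [seq map snd (leaves p) | p <- dforms D].

Definition up (e : edge) : node :=
  match e.1 with 0 => NTop | i.+1 => NV i end.

Definition consumes (e : edge) (o : option (vlabel * seq edge)) : bool :=
  if o is Some (_, ups) then e \in ups else false.

Definition lo (A : Type) (D : derivation A) (e : edge) : node :=
  let j := find (consumes e) (dinfo D) in
  if j < size (dinfo D) then NV j else NBot.

Definition ai_vertex (A : Type) (D : derivation A) (v : node) : Prop :=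
  match v with
  | NV j => nth None (dinfo D) j = Some (VInt, [::]) \/
            exists ups, nth None (dinfo D) j = Some (VCut, ups)
  | _ => False
  end.

Inductive dpath (A : Type) (D : derivation A) : node -> seq edge -> node -> Prop :=
| dp_one e : e \in edges D -> dpath D (up e) [:: e] (lo D e)
| dp_cons e s v' : e \in edges D -> dpath D (lo D e) s v' -> dpath D (up e) (e :: s) v'.

Inductive aipath (A : Type) (D : derivation A) : node -> seq edge -> node -> Prop :=
| ai_path v s v' : dpath D v s v' -> aipath D v s v'
| ai_rev v s v' : dpath D v' s v -> aipath D v (rev s) v'
| ai_cat v s1 e1 w e2 s2 v' :
    aipath D v (rcons s1 e1) w -> aipath D w (e2 :: s2) v' ->
    ai_vertex D w -> e1 <> e2 ->
    aipath D v (rcons s1 e1 ++ e2 :: s2) v'.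

Definition ai_cycle (A : Type) (D : derivation A) (s : seq edge) : Prop :=
  exists n, aipath D (NV n) s (NV n) /\ uniq s.

Definition cycle_free (A : Type) (D : derivation A) : Prop :=
  forall s, ~ ai_cycle D s.

(* Main.v *)
Require Import Defs.
From mathcomp Require Import all_boot.
From mathcomp Require Import zify.
From Stdlib Require Import Classical ClassicalEpsilon FunctionalExtensionality PropExtensionality.
From Stdlib Require List.

Set Implicit Arguments. Unset Strict Implicit. Unset Printing Implicit Defensive.

Section Frame.
Variables (A : Type) (bar : A -> A).

Definition info := option (vlabel * seq edge).

Inductive DV : nat -> lformula A -> lformula A -> seq (lformula A) -> seq info -> Prop :=
| dv_nil i p : DV i p p [:: p] [::]
| dv_cons i p q r fs l o : lstep bar i p q o -> DV i.+1 q r fs l -> DV i p r (p :: fs) (o :: l).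

Definition okinfo (ok : vlabel -> bool) (o : info) : bool :=
  if o is Some (l, _) then ok l else true.

Inductive Der (ok : vlabel -> bool) (x y : formula A) : Prop :=
  DerI of (forall i (p : lformula A), erase p = x -> exists q fs l,
    DV i p q fs l /\ erase q = y /\ all (okinfo ok) l).

Lemma DV_head i p r fs l : DV i p r fs l -> fs = p :: behead fs.
Proof. by case. Qed.

Lemma DV_app i p q r fs1 l1 fs2 l2 : DV i p q fs1 l1 -> DV (i + size l1) q r fs2 l2 ->
  DV i p r (fs1 ++ behead fs2)%SEQ (l1 ++ l2).
Proof.
elim=> {i p q fs1 l1} [i p|i p q r' fs l o H1 H2 IH] /= H.
  rewrite addn0 in H. by rewrite -(DV_head H).
apply: dv_cons H1 _. apply: IH. by rewrite addSnnS.
Qed.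


Fixpoint ccomp (c c' : ctx (A * edge)) : ctx (A * edge) :=
  match c with
  | Hole => c'
  | COrL c q => COrL (ccomp c c') q
  | COrR q c => COrR q (ccomp c c')
  | CAndL c q => CAndL (ccomp c c') q
  | CAndR q c => CAndR q (ccomp c c')
  end.

Lemma plug_comp c c' p : plug c (plug c' p) = plug (ccomp c c') p.
Proof. by elim: c => //= [c IH q|q c IH|c IH q|q c IH]; rewrite IH. Qed.

Lemma lstep_ctx c i a b o : lstep bar i a b o -> lstep bar i (plug c a) (plug c b) o.
Proof.
case=> [c' a' b' H|c' a' b' l ups H]; rewrite !plug_comp; by constructor.
Qed.

Lemma DV_ctx c i p q fs l : DV i p q fs l -> DV i (plug c p) (plug c q) (map (plug c) fs) l.
Proof.
elim=> {i p q fs l} [i p|i p q r fs l o H1 H2 IH] /=; first by constructor.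
apply: dv_cons IH. exact: lstep_ctx.
Qed.

Lemma Der_refl ok x : Der ok x x.
Proof. constructor=> i p Hp. exists p, [:: p], [::]. split=> //. constructor. Qed.

Lemma Der_trans ok x y z : Der ok x y -> Der ok y z -> Der ok x z.
Proof.
move=> [H1] [H2]; constructor=> i p Hp. have [q [fs1 [l1 [D1 [Hq O1]]]]] := H1 i p Hp.
have [r [fs2 [l2 [D2 [Hr O2]]]]] := H2 (i + size l1) q Hq.
exists r, (fs1 ++ behead fs2)%SEQ, (l1 ++ l2). split; first exact: DV_app D1 D2.
by rewrite all_cat O1 O2.
Qed.

Lemma erase_and (p : lformula A) x z : erase p = FAnd x z -> exists p1 p2, p = FAnd p1 p2 /\ erase p1 = x /\ erase p2 = z.
Proof. case: p => //= p1 p2 [<- <-]. by exists p1, p2. Qed.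
Lemma erase_or (p : lformula A) x z : erase p = FOr x z -> exists p1 p2, p = FOr p1 p2 /\ erase p1 = x /\ erase p2 = z.
Proof. case: p => //= p1 p2 [<- <-]. by exists p1, p2. Qed.
Lemma erase_at (p : lformula A) a : erase p = FAt a -> exists e, p = FAt (a, e).
Proof. case: p => //= -[a' e] [<-]. by exists e. Qed.
Lemma erase_ff (p : lformula A) : erase p = FF -> p = FF.
Proof. by case: p. Qed.
Lemma erase_tt (p : lformula A) : erase p = FT -> p = FT.
Proof. by case: p. Qed.

Lemma eraseA (p q : lformula A) : erase (FAnd p q) = FAnd (erase p) (erase q). Proof. by []. Qed.
Lemma eraseO (p q : lformula A) : erase (FOr p q) = FOr (erase p) (erase q). Proof. by []. Qed.

Lemma Der_ctx_gen ok x y : Der ok x y -> forall c i p, erase p = x ->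
  exists q fs l, DV i (plug c p) (plug c q) fs l /\ erase q = y /\ all (okinfo ok) l.
Proof.
move=> [H] c i p Hp. have [q [fs [l [D [Hq O]]]]] := H i p Hp.
exists q, (map (plug c) fs), l. split=> //. exact: DV_ctx.
Qed.

Lemma Der_andL ok x x' z : Der ok x x' -> Der ok (FAnd x z) (FAnd x' z).
Proof.
move=> H; constructor=> i p /erase_and [p1 [p2 [-> [H1 H2]]]].
have [q [fs [l [D [Hq O]]]]] := Der_ctx_gen H (CAndL Hole p2) i H1.
exists (FAnd q p2), fs, l. by rewrite eraseA Hq H2.
Qed.
Lemma Der_andR ok x x' z : Der ok x x' -> Der ok (FAnd z x) (FAnd z x').
Proof.
move=> H; constructor=> i p /erase_and [p1 [p2 [-> [H1 H2]]]].
have [q [fs [l [D [Hq O]]]]] := Der_ctx_gen H (CAndR p1 Hole) i H2.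
exists (FAnd p1 q), fs, l. by rewrite eraseA Hq H1.
Qed.
Lemma Der_orL ok x x' z : Der ok x x' -> Der ok (FOr x z) (FOr x' z).
Proof.
move=> H; constructor=> i p /erase_or [p1 [p2 [-> [H1 H2]]]].
have [q [fs [l [D [Hq O]]]]] := Der_ctx_gen H (COrL Hole p2) i H1.
exists (FOr q p2), fs, l. by rewrite eraseO Hq H2.
Qed.
Lemma Der_orR ok x x' z : Der ok x x' -> Der ok (FOr z x) (FOr z x').
Proof.
move=> H; constructor=> i p /erase_or [p1 [p2 [-> [H1 H2]]]].
have [q [fs [l [D [Hq O]]]]] := Der_ctx_gen H (COrR p1 Hole) i H2.
exists (FOr p1 q), fs, l. by rewrite eraseO Hq H1.
Qed.

Lemma Der_and ok x x' z z' : Der ok x x' -> Der ok z z' -> Der ok (FAnd x z) (FAnd x' z').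
Proof. move=> H1 H2; apply: Der_trans; [exact: Der_andL H1|exact: Der_andR H2]. Qed.
Lemma Der_or ok x x' z z' : Der ok x x' -> Der ok z z' -> Der ok (FOr x z) (FOr x' z').
Proof. move=> H1 H2; apply: Der_trans; [exact: Der_orL H1|exact: Der_orR H2]. Qed.

Lemma Der_one ok x y : (forall i p, erase p = x -> exists q o, lstep bar i p q o /\ erase q = y /\ okinfo ok o) ->
  Der ok x y.
Proof.
move=> H; constructor=> i p Hp. have [q [o [S [Hq O]]]] := H i p Hp.
exists q, [:: p; q], [:: o]. split; first by apply: dv_cons S (dv_nil _ _).
by rewrite /= O.
Qed.

Lemma eqn_lab (x y : formula A) : Defs.eqn x y -> forall (p : lformula A), erase p = x -> exists q, erase q = y /\ Defs.eqn p q.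
Proof.
case=> [a b|a b|a b c|a b c|a|a||] p.
- move/erase_or=> [p1 [p2 [-> [<- <-]]]]. exists (FOr p2 p1). split=>//. constructor.
- move/erase_and=> [p1 [p2 [-> [<- <-]]]]. exists (FAnd p2 p1). split=>//. constructor.
- move/erase_or=> [p1 [p3 [-> [/erase_or [p1' [p2 [-> [<- <-]]]] <-]]]].
  exists (FOr p1' (FOr p2 p3)). split=>//. constructor.
- move/erase_and=> [p1 [p3 [-> [/erase_and [p1' [p2 [-> [<- <-]]]] <-]]]].
  exists (FAnd p1' (FAnd p2 p3)). split=>//. constructor.
- move/erase_or=> [p1 [p2 [-> [<- /erase_ff ->]]]]. exists p1. split=>//. constructor.
- move/erase_and=> [p1 [p2 [-> [<- /erase_tt ->]]]]. exists p1. split=>//. constructor.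
- move/erase_or=> [p1 [p2 [-> [/erase_tt -> /erase_tt ->]]]]. exists FT. split=>//. constructor.
- move/erase_and=> [p1 [p2 [-> [/erase_ff -> /erase_ff ->]]]]. exists FF. split=>//. constructor.
Qed.

Lemma eqn_lab_rev (x y : formula A) : Defs.eqn x y -> forall (q : lformula A), erase q = y -> exists p, erase p = x /\ Defs.eqn p q.
Proof.
case=> [a b|a b|a b c|a b c|a|a||] q.
- move/erase_or=> [p1 [p2 [-> [<- <-]]]]. exists (FOr p2 p1). split=>//. constructor.
- move/erase_and=> [p1 [p2 [-> [<- <-]]]]. exists (FAnd p2 p1). split=>//. constructor.
- move/erase_or=> [p1 [p3 [-> [<- /erase_or [p2 [p3' [-> [<- <-]]]]]]]].
  exists (FOr (FOr p1 p2) p3'). split=>//. constructor.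
- move/erase_and=> [p1 [p3 [-> [<- /erase_and [p2 [p3' [-> [<- <-]]]]]]]].
  exists (FAnd (FAnd p1 p2) p3'). split=>//. constructor.
- move=> Hq. exists (FOr q FF). rewrite eraseO Hq. split=>//. constructor.
- move=> Hq. exists (FAnd q FT). rewrite eraseA Hq. split=>//. constructor.
- move/erase_tt ->. exists (FOr FT FT). split=>//. constructor.
- move/erase_ff ->. exists (FAnd FF FF). split=>//. constructor.
Qed.

Lemma Der_eq ok x y : Defs.eqn x y -> Der ok x y.
Proof.
move=> E; apply: Der_one => i p Hp. have [q [Hq E']] := eqn_lab E Hp.
exists q, None. split=>//. apply: (@ls_struct A bar i Hole). exact: sr_eq_lr.
Qed.

Lemma Der_eqr ok x y : Defs.eqn x y -> Der ok y x.
Proof.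
move=> E; apply: Der_one => i q Hq. have [p [Hp E']] := eqn_lab_rev E Hq.
exists p, None. split=>//. apply: (@ls_struct A bar i Hole). exact: sr_eq_rl.
Qed.

Lemma Der_switch ok a b c : Der ok (FAnd a (FOr b c)) (FOr (FAnd a b) c).
Proof.
apply: Der_one => i p /erase_and [p1 [p' [-> [<- /erase_or [p2 [p3 [-> [<- <-]]]]]]]].
exists (FOr (FAnd p1 p2) p3), None. split=>//. apply: (@ls_struct A bar i Hole). constructor.
Qed.

Lemma Der_medial ok a b c d : Der ok (FOr (FAnd a b) (FAnd c d)) (FAnd (FOr a c) (FOr b d)).
Proof.
apply: Der_one => i p /erase_or [p' [p'' [-> [/erase_and [p1 [p2 [-> [<- <-]]]] /erase_and [p3 [p4 [-> [<- <-]]]]]]]].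
exists (FAnd (FOr p1 p3) (FOr p2 p4)), None. split=>//.
apply: (@ls_struct A bar i Hole). constructor.
Qed.

Lemma Der_atomic (ok : vlabel -> bool) x y l : ok l ->
  (forall i p, erase p = x -> exists q ups, arule bar i p q l ups /\ erase q = y) -> Der ok x y.
Proof.
move=> Hl H; apply: Der_one => i p Hp. have [q [ups [R Hq]]] := H i p Hp.
exists q, (Some (l, ups)). split=>//. by apply: (@ls_atomic A bar i Hole).
Qed.

Lemma Der_int (ok : vlabel -> bool) a : ok VInt -> Der ok FT (FOr (FAt a) (FAt (bar a))).
Proof. move=> H; apply: Der_atomic H _ => i p /erase_tt ->. eexists _, _. split. constructor. done. Qed.
Lemma Der_weak (ok : vlabel -> bool) a : ok VWeak -> Der ok FF (FAt a).
Proof. move=> H; apply: Der_atomic H _ => i p /erase_ff ->. eexists _, _. split. constructor. done. Qed.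
Lemma Der_contr (ok : vlabel -> bool) a : ok VContr -> Der ok (FOr (FAt a) (FAt a)) (FAt a).
Proof.
move=> H; apply: Der_atomic H _ => i p /erase_or [p1 [p2 [-> [/erase_at [e1 ->] /erase_at [e2 ->]]]]].
eexists _, _. split. constructor. done.
Qed.
Lemma Der_cut (ok : vlabel -> bool) a : ok VCut -> Der ok (FAnd (FAt a) (FAt (bar a))) FF.
Proof.
move=> H; apply: Der_atomic H _ => i p /erase_and [p1 [p2 [-> [/erase_at [e1 ->] /erase_at [e2 ->]]]]].
eexists _, _. split. constructor. done.
Qed.
Lemma Der_coweak (ok : vlabel -> bool) a : ok VCoweak -> Der ok (FAt a) FT.
Proof. move=> H; apply: Der_atomic H _ => i p /erase_at [e ->]. eexists _, _. split. constructor. done. Qed.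
Lemma Der_cocontr (ok : vlabel -> bool) a : ok VCocontr -> Der ok (FAt a) (FAnd (FAt a) (FAt a)).
Proof. move=> H; apply: Der_atomic H _ => i p /erase_at [e ->]. eexists _, _. split. constructor. done. Qed.

End Frame.

Arguments Der_refl {A bar ok x}.
Arguments Der_trans {A bar ok x y z} _ _.
Arguments Der_andL {A bar ok x x' z} _.
Arguments Der_andR {A bar ok x x' z} _.
Arguments Der_orL {A bar ok x x' z} _.
Arguments Der_orR {A bar ok x x' z} _.
Arguments Der_and {A bar ok x x' z z'} _ _.
Arguments Der_or {A bar ok x x' z z'} _ _.
Arguments Der_eq {A bar ok x y} _.
Arguments Der_eqr {A bar ok x y} _.
Arguments Der_switch {A bar ok a b c}.
Arguments Der_medial {A bar ok a b c d}.
Arguments Der_int {A bar ok a} _.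
Arguments Der_weak {A bar ok a} _.
Arguments Der_contr {A bar ok a} _.
Arguments Der_cut {A bar ok a} _.
Arguments Der_coweak {A bar ok a} _.
Arguments Der_cocontr {A bar ok a} _.

Unset Implicit Arguments. Unset Printing Implicit Defensive.

Fixpoint eval {X : Type} (v : X -> bool) (x : formula X) : bool :=
  match x with
  | FF => false | FT => true | FAt a => v a
  | FOr x y => eval v x || eval v y
  | FAnd x y => eval v x && eval v y
  end.

Lemma srule_sound {X : Type} (v : X -> bool) (x y : formula X) : srule x y -> eval v x -> eval v y.
Proof.
case=> [a b c|a b c d|a b E|a b E] /=.
- by case: (eval v a); case: (eval v b); case: (eval v c).
- by case: (eval v a); case: (eval v b); case: (eval v c); case: (eval v d).
- case: E => /= [a' b'|a' b'|a' b' c'|a' b' c'|a'|a'||].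
  + by rewrite orbC.
  + by rewrite andbC.
  + by rewrite orbA.
  + by rewrite andbA.
  + by rewrite orbF.
  + by rewrite andbT.
  + done.
  + done.
- case: E => /= [a' b'|a' b'|a' b' c'|a' b' c'|a'|a'||].
  + by rewrite orbC.
  + by rewrite andbC.
  + by rewrite orbA.
  + by rewrite andbA.
  + by rewrite orbF.
  + by rewrite andbT.
  + done.
  + done.
Qed.

Section Sem.
Variables (A : Type) (bar : A -> A).
Hypothesis bar_inv : forall a, bar (bar a) = a.
Hypothesis bar_neq : forall a, bar a <> a.

Definition good (v : A -> bool) := forall a, v (bar a) = ~~ v a.

Lemma ctx_mono v c (a b : lformula A) : (eval v (erase a) -> eval v (erase b)) ->
  eval v (erase (plug c a)) -> eval v (erase (plug c b)).
Proof.
move=> H; elim: c => [|c IH q|q c IH|c IH q|q c IH] //=;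
rewrite ?eraseO ?eraseA /=; move/orP || move/andP.
- case=> [/IH ->|->] //; by rewrite orbT.
- case=> [->|/IH ->] //; by rewrite orbT.
- case=> /IH -> ->. done.
- case=> -> /IH ->. done.
Qed.

Lemma erase_fmap_eval v (p : lformula A) : eval v (erase p) = eval (fun x : A * edge => v x.1) p.
Proof. by elim: p => //= [p IHp q IHq|p IHp q IHq]; rewrite ?eraseO ?eraseA /= -IHp -IHq. Qed.

Lemma lstep_sound v i (p q : lformula A) o : good v -> lstep bar i p q o ->
  eval v (erase p) -> eval v (erase q).
Proof.
move=> Gv; case=> [c a b S|c a b l ups R]; apply: ctx_mono.
- rewrite !erase_fmap_eval. exact: srule_sound.
- case: R => /= [a'|a'|a' e1 e2|a' e1 e2|a' e|a' e]; rewrite ?eraseO ?eraseA /= ?Gv.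
  + by case: (v a').
  + done.
  + by rewrite orbb.
  + by case: (v a').
  + done.
  + by rewrite andbb.
Qed.


Lemma deriv_sound (Dv : derivation A) x y : is_derivation bar Dv x y ->
  forall v, good v -> eval v x -> eval v y.
Proof.
case=> Hs [_ [Hst [Hx Hy]]] v Gv.
have H : forall k, k <= size (dinfo Dv) -> eval v (erase (nth FF (dforms Dv) 0)) ->
   eval v (erase (nth FF (dforms Dv) k)).
  elim=> [|k IH] // Hk H0. apply: lstep_sound Gv (Hst k Hk) _. exact: IH (ltnW Hk) H0.
rewrite -Hx -Hy -nth0 -nth_last Hs /= => H0. exact: H.
Qed.

End Sem.

Unset Implicit Arguments. Unset Printing Implicit Defensive.

Section Derived.
Variables (A : Type) (bar : A -> A) (ok : vlabel -> bool) (a0 : A).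
Hypotheses (okW : ok VWeak) (okCW : ok VCoweak) (okC : ok VContr) (okCC : ok VCocontr).

Notation D := (Der bar ok).

Lemma T {x y z} : D x y -> D y z -> D x z. Proof. exact: Der_trans. Qed.
Lemma Eq {x y} : Defs.eqn x y -> D x y. Proof. exact: Der_eq. Qed.
Lemma Eqr {x y} : Defs.eqn x y -> D y x. Proof. exact: Der_eqr. Qed.

Lemma and_comm x y : D (FAnd x y) (FAnd y x). Proof. apply: Eq; constructor. Qed.
Lemma or_comm x y : D (FOr x y) (FOr y x). Proof. apply: Eq; constructor. Qed.
Lemma and_assoc x y z : D (FAnd (FAnd x y) z) (FAnd x (FAnd y z)). Proof. apply: Eq; constructor. Qed.
Lemma and_assocr x y z : D (FAnd x (FAnd y z)) (FAnd (FAnd x y) z). Proof. apply: Eqr; constructor. Qed.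
Lemma or_assoc x y z : D (FOr (FOr x y) z) (FOr x (FOr y z)). Proof. apply: Eq; constructor. Qed.
Lemma or_assocr x y z : D (FOr x (FOr y z)) (FOr (FOr x y) z). Proof. apply: Eqr; constructor. Qed.
Lemma and_t x : D (FAnd x FT) x. Proof. apply: Eq; constructor. Qed.
Lemma and_tr x : D x (FAnd x FT). Proof. apply: Eqr; constructor. Qed.
Lemma or_f x : D (FOr x FF) x. Proof. apply: Eq; constructor. Qed.
Lemma or_fr x : D x (FOr x FF). Proof. apply: Eqr; constructor. Qed.
Lemma t_and_l x : D (FAnd FT x) x. Proof. exact: T (and_comm _ _) (and_t _). Qed.
Lemma f_or_l x : D (FOr FF x) x. Proof. exact: T (or_comm _ _) (or_f _). Qed.
Lemma t_and_lr x : D x (FAnd FT x). Proof. exact: T (and_tr _) (and_comm _ _). Qed.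
Lemma f_or_lr x : D x (FOr FF x). Proof. exact: T (or_fr _) (or_comm _ _). Qed.

Lemma and_mswap a b c d : D (FAnd (FAnd a b) (FAnd c d)) (FAnd (FAnd a c) (FAnd b d)).
Proof.
apply: T (and_assoc _ _ _) _. apply: T (Der_andR (and_assocr _ _ _)) _.
apply: T (Der_andR (Der_andL (and_comm _ _))) _.
apply: T (Der_andR (and_assoc _ _ _)) _. exact: and_assocr.
Qed.
Lemma or_mswap a b c d : D (FOr (FOr a b) (FOr c d)) (FOr (FOr a c) (FOr b d)).
Proof.
apply: T (or_assoc _ _ _) _. apply: T (Der_orR (or_assocr _ _ _)) _.
apply: T (Der_orR (Der_orL (or_comm _ _))) _.
apply: T (Der_orR (or_assoc _ _ _)) _. exact: or_assocr.
Qed.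

Lemma gcocontr x : D x (FAnd x x).
Proof.
elim: x => [|||x IHx y IHy|x IHx y IHy].
- exact: Eqr (eq_ff _).
- exact: and_tr.
- move=> a. exact: (Der_cocontr okCC).
- apply: T (Der_or IHx IHy) _. exact: Der_medial.
- apply: T (Der_and IHx IHy) _. exact: and_mswap.
Qed.

Lemma gcontr x : D (FOr x x) x.
Proof.
elim: x => [|||x IHx y IHy|x IHx y IHy].
- exact: or_f.
- exact: Eq (eq_tt _).
- move=> a. exact: (Der_contr okC).
- apply: T (or_mswap _ _ _ _) _. exact: Der_or IHx IHy.
- apply: T (Der_medial) _. exact: Der_and IHx IHy.
Qed.

Lemma f_t : D FF FT.
Proof. apply: T (@Der_weak _ bar ok a0 okW) _. exact: (Der_coweak okCW). Qed.

Lemma gweak x : D FF x.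
Proof.
elim: x => [|||x IHx y IHy|x IHx y IHy].
- exact: Der_refl.
- exact: f_t.
- move=> a. exact: (Der_weak okW).
- apply: T (or_fr _) _. exact: Der_or IHx IHy.
- apply: T (Eqr (eq_ff _)) _. exact: Der_and IHx IHy.
Qed.

Lemma gcoweak x : D x FT.
Proof.
elim: x => [|||x IHx y IHy|x IHx y IHy].
- exact: f_t.
- exact: Der_refl.
- move=> a. exact: (Der_coweak okCW).
- apply: T (Der_or IHx IHy) _. exact: Eq (eq_tt _).
- apply: T (Der_and IHx IHy) _. exact: and_t.
Qed.

Lemma distr p q r : D (FAnd p (FOr q r)) (FOr (FAnd p q) (FAnd p r)).
Proof.
apply: T (Der_andL (gcocontr p)) _. apply: T (and_assoc _ _ _) _.
apply: T (Der_andR (Der_switch)) _.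
apply: T (Der_andR (or_comm _ _)) _.
apply: T (Der_switch) _. exact: or_comm.
Qed.

Lemma distr_r p q r : D (FAnd (FOr q r) p) (FOr (FAnd q p) (FAnd r p)).
Proof.
apply: T (and_comm _ _) _. apply: T (distr _ _ _) _. exact: Der_or (and_comm _ _) (and_comm _ _).
Qed.

Lemma and_projl x y : D (FAnd x y) x.
Proof. apply: T (Der_andR (gcoweak y)) _. exact: and_t. Qed.
Lemma and_projr x y : D (FAnd x y) y.
Proof. apply: T (and_comm _ _) _. exact: and_projl. Qed.
Lemma or_injl x y : D x (FOr x y).
Proof. apply: T (or_fr _) _. exact: Der_orR (gweak y). Qed.
Lemma or_injr x y : D y (FOr x y).
Proof. apply: T (or_injl _ x) _. exact: or_comm. Qed.


Definition cjn (c : seq A) : formula A := foldr (fun a f => FAnd (FAt a) f) FT c.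
Definition disj (cs : seq (seq A)) : formula A := foldr (fun c f => FOr (cjn c) f) FF cs.

Lemma eval_cjn (v : A -> bool) c : eval v (cjn c) = all v c.
Proof. by elim: c => //= a c ->. Qed.
Lemma eval_disj (v : A -> bool) cs : eval v (disj cs) = has (fun c => all v c) cs.
Proof. by elim: cs => //= c cs ->; rewrite eval_cjn. Qed.

Lemma proj_in b c : List.In b c -> D (cjn c) (FAt b).
Proof.
elim: c => //= x r IH [->|/IH H].
- exact: and_projl.
- exact: T (and_projr _ _) H.
Qed.

Lemma sub_conj c c' : (forall b, List.In b c' -> List.In b c) -> D (cjn c) (cjn c').
Proof.
elim: c' => [|b c' IH] H /=.
- exact: gcoweak.
- apply: T (gcocontr _) _. apply: Der_and. apply: proj_in; apply: H; by left.
  apply: IH => z Hz; apply: H; by right.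
Qed.

Lemma disj_app s1 s2 : D (FOr (disj s1) (disj s2)) (disj (s1 ++ s2)).
Proof.
elim: s1 => [|c s1 IH] /=; first exact: f_or_l.
apply: T (or_assoc _ _ _) _. exact: Der_orR IH.
Qed.

Lemma cjn_app c1 c2 : D (FAnd (cjn c1) (cjn c2)) (cjn (c1 ++ c2)).
Proof.
elim: c1 => [|a c1 IH] /=; first exact: t_and_l.
apply: T (and_assoc _ _ _) _. exact: Der_andR IH.
Qed.

Lemma cjn_disj c s2 : D (FAnd (cjn c) (disj s2)) (disj [seq c ++ c2 | c2 <- s2]).
Proof.
elim: s2 => [|c2 s2 IH] /=; first exact: and_projr.
apply: T (distr _ _ _) _. exact: Der_or (cjn_app _ _) IH.
Qed.

Lemma disj_prod s1 s2 : D (FAnd (disj s1) (disj s2)) (disj [seq c1 ++ c2 | c1 <- s1, c2 <- s2]).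
Proof.
elim: s1 => [|c s1 IH] /=; first exact: and_projl.
apply: T (distr_r _ _ _) _. apply: T (Der_or (cjn_disj _ _) IH) _. exact: disj_app.
Qed.

Fixpoint dnf (x : formula A) : seq (seq A) :=
  match x with
  | FF => [::] | FT => [:: [::]] | FAt a => [:: [:: a]]
  | FOr x y => dnf x ++ dnf y
  | FAnd x y => [seq c1 ++ c2 | c1 <- dnf x, c2 <- dnf y]
  end.

Lemma dnf_der x : D x (disj (dnf x)).
Proof.
elim: x => [|||x IHx y IHy|x IHx y IHy] /=.
- exact: Der_refl.
- exact: or_fr.
- move=> a. apply: T (and_tr _) _. exact: or_fr.
- apply: T (Der_or IHx IHy) _. exact: disj_app.
- apply: T (Der_and IHx IHy) _. exact: disj_prod.
Qed.

Lemma has_andl (v : A -> bool) (b : bool) (c : seq A) (s2 : seq (seq A)) :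
  has (fun c2 => all v (c ++ c2)) s2 = all v c && has (fun c => all v c) s2.
Proof. elim: s2 => [|c2 s2 IH] /=; first by rewrite andbF. by rewrite IH all_cat andb_orr. Qed.

Lemma has_prod (v : A -> bool) s1 s2 : has (fun c => all v c) [seq c1 ++ c2 | c1 <- s1, c2 <- s2] =
  has (fun c => all v c) s1 && has (fun c => all v c) s2.
Proof.
elim: s1 => [|c s1 IH] //=. rewrite has_cat IH has_map /preim /=.
by rewrite (has_andl v true) andb_orl.
Qed.

Lemma dnf_sem (v : A -> bool) x : eval v x = has (fun c => all v c) (dnf x).
Proof.
elim: x => //= [a|x IHx y IHy|x IHx y IHy].
- by rewrite andbT orbF.
- by rewrite has_cat IHx IHy.
- by rewrite has_prod IHx IHy.
Qed.

Lemma In_has (v : A -> bool) c cs : List.In c cs -> all v c -> has (fun c => all v c) cs.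
Proof. elim: cs => //= c' cs IH [->->//|/IH H H']. by rewrite H ?orbT. Qed.

Definition consistent (c : seq A) : Prop := forall a, List.In a c -> ~ List.In (bar a) c.
Definition consb (c : seq A) : bool := if excluded_middle_informative (consistent c) then true else false.

Lemma filt_der cs : ok VCut -> D (disj cs) (disj (filter consb cs)).
Proof.
move=> okCut. elim: cs => [|c cs IH] /=; first exact: Der_refl.
rewrite /consb; case: excluded_middle_informative => Hc /=.
- exact: Der_orR IH.
- apply: T _ IH. apply: T _ (f_or_l _). apply: Der_orL.
  have [a Ha] : exists a, List.In a c /\ List.In (bar a) c.
    apply: NNPP => H; apply: Hc => a Ha Hb; apply: H; by exists a.
  apply: T (sub_conj c [:: a; bar a] _) _.
    move=> b /= [<-|[<-|[]]]; by case: Ha.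
  rewrite /=. apply: T (Der_andR (and_t _)) _. exact: Der_cut okCut.
Qed.

Lemma all_In (v : A -> bool) c : (forall b, List.In b c -> v b) -> all v c.
Proof. elim: c => //= b c IH H. rewrite H /=; [apply: IH => z Hz; apply: H|]; by [right|left]. Qed.
Lemma In_all (v : A -> bool) c b : all v c -> List.In b c -> v b.
Proof. elim: c => //= x c IH /andP [H1 H2] [<-//|]. exact: IH. Qed.

Hypothesis bar_inv : forall a, bar (bar a) = a.
Hypothesis bar_neq : forall a, bar a <> a.

Lemma sel_exists : exists s : A -> bool, forall b, s (bar b) = ~~ s b.
Proof.
pose P := fun b x => x = b \/ x = bar b.
pose rep b := epsilon (inhabits a0) (P b).
have HP : forall b, P (bar b) = P b.
  move=> b; apply: functional_extensionality => z; apply: propositional_extensionality.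
  rewrite /P bar_inv; tauto.
have Hrep : forall b, P b (rep b).
  move=> b; apply: epsilon_spec; exists b; by left.
exists (fun b => if excluded_middle_informative (rep b = b) then true else false).
move=> b. have E : rep (bar b) = rep b by rewrite /rep HP.
case: excluded_middle_informative => H1; case: excluded_middle_informative => H2 //.
- exfalso; apply: (bar_neq b). rewrite -{1}H1 E; exact: H2.
- exfalso; case: (Hrep b) => // H3; by apply: H1; rewrite E.
Qed.

Lemma sat c : consistent c -> exists v, good A bar v /\ all v c.
Proof.
move=> Hc. have [s Hs] := sel_exists.
exists (fun b => if excluded_middle_informative (List.In b c) then true
   else if excluded_middle_informative (List.In (bar b) c) then false else s b).
split.
- move=> b. rewrite bar_inv.
  case: (excluded_middle_informative (List.In (bar b) c)) => H1;
  case: (excluded_middle_informative (List.In b c)) => H2 //=.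
  + exfalso; exact: Hc b H2 H1.
- apply: all_In => b Hb. by case: excluded_middle_informative.
Qed.

Lemma cons_ext c b : consistent c -> ~ List.In (bar b) c -> consistent (b :: c).
Proof.
move=> Hc Hb a /= [<-|Ha] [Hba|Hba].
- exact: bar_neq _ (esym Hba).
- exact: Hb Hba.
- apply: Hb. by rewrite Hba bar_inv.
- exact: Hc Ha Hba.
Qed.

Definition sem c y := forall v, good A bar v -> all v c -> eval v y.
Definition decided c b := List.In b c \/ List.In (bar b) c.
Definition decb c b : bool := if excluded_middle_informative (decided c b) then true else false.
Definition undec c y := count (fun b => ~~ decb c b) (leaves y).

Lemma agree (v w : A -> bool) y : (forall b, List.In b (leaves y) -> v b = w b) -> eval v y = eval w y.
Proof.
elim: y => //= [a|x IHx y IHy|x IHx y IHy] H.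
- apply: H; by left.
- rewrite IHx ?IHy // => b Hb; apply: H; apply: List.in_or_app; by [right|left].
- rewrite IHx ?IHy // => b Hb; apply: H; apply: List.in_or_app; by [right|left].
Qed.

Lemma decided_split c y1 y2 : consistent c -> (forall b, List.In b (leaves (FOr y1 y2)) -> decided c b) ->
  sem c (FOr y1 y2) -> sem c y1 \/ sem c y2.
Proof.
move=> Hc Hd Hs. have [v0 [G0 H0]] := sat _ Hc.
have Ag : forall v, good A bar v -> all v c -> forall b, List.In b (leaves (FOr y1 y2)) -> v b = v0 b.
  move=> v Gv Hv b Hb. case: (Hd b Hb) => Hb'.
  - by rewrite (In_all _ _ _ Hv Hb') (In_all _ _ _ H0 Hb').
  - have := In_all _ _ _ Hv Hb'; have := In_all _ _ _ H0 Hb'. rewrite Gv G0.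
    by case: (v b); case: (v0 b).
have := Hs v0 G0 H0. rewrite /= => /orP [E|E]; [left|right] => v Gv Hv;
  rewrite (agree v v0) // => b Hb; apply: Ag => //=; apply: List.in_or_app; by [left|right].
Qed.

Lemma count_lt (p q : A -> bool) s : (forall z, q z -> p z) ->
  (exists z, List.In z s /\ p z /\ ~~ q z) -> count q s < count p s.
Proof.
move=> Hqp. have Hle : forall s, count q s <= count p s.
  move=> s'; apply: sub_count => z; exact: Hqp.
elim: s => [|x s IH] [z [Hz [Hp Hq]]] //=.
case: Hz => [Ez|Hz].
- subst z. rewrite Hp (negbTE Hq) /= add0n add1n ltnS. exact: Hle.
- have := IH (ex_intro _ z (Logic.conj Hz (Logic.conj Hp Hq))).
  case Eq: (q x); case Ep: (p x) => //=; rewrite ?add0n ?add1n ?ltnS // => H;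
  try exact: ltnW; by rewrite (Hqp _ Eq) in Ep.
Qed.

Lemma undec_lt c b y : List.In b (leaves y) -> ~ decided c b -> undec (b :: c) y < undec c y.
Proof.
move=> Hb Hd. apply: count_lt.
- move=> z. rewrite /decb. do 2 case: excluded_middle_informative => //.
  move=> H1 H2; exfalso; apply: H2. case: H1 => H; [left|right]; by right.
- exists b. split=> //. rewrite /decb. do 2 case: excluded_middle_informative => //.
  move=> H1; exfalso; apply: H1; left; by left.
Qed.

Lemma undec_lt' c b y : List.In b (leaves y) -> ~ decided c b -> undec (bar b :: c) y < undec c y.
Proof.
move=> Hb Hd. apply: count_lt.
- move=> z. rewrite /decb. do 2 case: excluded_middle_informative => //.
  move=> H1 H2; exfalso; apply: H2. case: H1 => H; [left|right]; by right.
- exists b. split=> //. rewrite /decb. do 2 case: excluded_middle_informative => //.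
  move=> H1; exfalso; apply: H1; right; by left.
Qed.

Lemma phase2_step (okI : ok VInt) n :
  (forall y c, undec c y < n -> consistent c -> sem c y -> D (cjn c) y) ->
  forall y c, undec c y <= n -> consistent c -> sem c y -> D (cjn c) y.
Proof.
move=> IHn. elim=> [|| b |y1 IH1 y2 IH2|y1 IH1 y2 IH2] c Hu Hc Hs.
- have [v [Gv Hv]] := sat _ Hc. by have := Hs v Gv Hv.
- exact: gcoweak.
- case: (classic (List.In b c)) => Hb; first exact: proj_in.
  have Hc' : consistent (bar b :: c) by apply: cons_ext; rewrite ?bar_inv.
  have [v [Gv Hv]] := sat _ Hc'. move: Hv => /= /andP [Hvb Hv].
  have := Hs v Gv Hv. by rewrite /= -[v b]negbK -Gv Hvb.
- have Hu1 : undec c y1 <= n by apply: leq_trans Hu; rewrite /undec /= count_cat leq_addr.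
  have Hu2 : undec c y2 <= n by apply: leq_trans Hu; rewrite /undec /= count_cat leq_addl.
  case: (classic (sem c y1)) => H1.
    apply: T (IH1 c Hu1 Hc H1) _. exact: or_injl.
  case: (classic (sem c y2)) => H2.
    apply: T (IH2 c Hu2 Hc H2) _. exact: or_injr.
  case: (classic (forall b, List.In b (leaves (FOr y1 y2)) -> decided c b)) => Hd.
    by case: (decided_split c y1 y2 Hc Hd Hs).
  have [b [Hb Hnd]] : exists b, List.In b (leaves (FOr y1 y2)) /\ ~ decided c b.
    apply: NNPP => H; apply: Hd => b Hb; apply: NNPP => Hn; apply: H; by exists b.
  have Hc1 : consistent (b :: c).
    apply: cons_ext => // H; apply: Hnd; by right.
  have Hc2 : consistent (bar b :: c).
    apply: cons_ext => //; rewrite bar_inv => H; apply: Hnd; by left.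
  have Hs1 : sem (b :: c) (FOr y1 y2) by move=> v Gv /andP [_ Hv]; exact: Hs.
  have Hs2 : sem (bar b :: c) (FOr y1 y2) by move=> v Gv /andP [_ Hv]; exact: Hs.
  have D1 := IHn _ _ (leq_trans (undec_lt c b _ Hb Hnd) Hu) Hc1 Hs1.
  have D2 := IHn _ _ (leq_trans (undec_lt' c b _ Hb Hnd) Hu) Hc2 Hs2.
  apply: T (and_tr _) _. apply: T (Der_andR (Der_int (a := b) okI)) _.
  apply: T (distr _ _ _) _.
  apply: T (Der_or (T (and_comm _ _) D1) (T (and_comm _ _) D2)) _.
  exact: gcontr.
- have Hu1 : undec c y1 <= n by apply: leq_trans Hu; rewrite /undec /= count_cat leq_addr.
  have Hu2 : undec c y2 <= n by apply: leq_trans Hu; rewrite /undec /= count_cat leq_addl.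
  apply: T (gcocontr _) _. apply: Der_and.
  + apply: IH1 => // v Gv Hv. by case/andP: (Hs v Gv Hv).
  + apply: IH2 => // v Gv Hv. by case/andP: (Hs v Gv Hv).
Qed.

Lemma phase2 (okI : ok VInt) n : forall y c, undec c y <= n -> consistent c -> sem c y -> D (cjn c) y.
Proof.
elim: n => [|n IHn].
- apply: phase2_step => // y c; by rewrite ltn0.
- by apply: phase2_step.
Qed.

Lemma phase2_disj (okI : ok VInt) cs y : (forall c, List.In c cs -> consistent c /\ sem c y) ->
  D (disj cs) y.
Proof.
elim: cs => [|c cs IH] H /=; first exact: gweak.
apply: T _ (gcontr y). apply: Der_or.
- have [Hc Hs] := H c (or_introl erefl). exact: phase2 okI _ y c (leqnn _) Hc Hs.
- apply: IH => c' Hc'. apply: H; by right.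
Qed.

End Derived.

Unset Implicit Arguments. Unset Printing Implicit Defensive.

Definition okNI (l : vlabel) : bool := if l is VInt then false else true.
Definition okNC (l : vlabel) : bool := if l is VCut then false else true.

Lemma In_filter {X : Type} (p : X -> bool) (s : seq X) z : List.In z (filter p s) -> List.In z s /\ p z.
Proof.
elim: s => //= x s IH. case E: (p x) => /=.
- case=> [<-|/IH [H1 H2]]; tauto.
- move/IH; tauto.
Qed.

Lemma complete (A : Type) (bar : A -> A) (bar_inv : forall a, bar (bar a) = a)
  (bar_neq : forall a, bar a <> a) (a0 : A) (x y : formula A) :
  (forall v, good A bar v -> eval v x -> eval v y) ->
  exists z, Der bar okNI x z /\ Der bar okNC z y.
Proof.
move=> Hxy. exists (disj A (filter (consb A bar) (dnf A x))). split.
- apply: Der_trans (dnf_der A bar okNI a0 isT isT isT x) _.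
  exact: (filt_der A bar okNI a0 isT isT isT _ isT).
- apply: (phase2_disj A bar okNC a0 isT isT isT isT bar_inv bar_neq isT) => c Hc0; have [Hc Hb] := In_filter _ _ _ Hc0.
  split.
  + move: Hb; rewrite /consb; by case: excluded_middle_informative.
  + move=> v Gv Hv. apply: Hxy => //. rewrite (dnf_sem A v x). exact: In_has Hc Hv.
Qed.

Unset Implicit Arguments. Unset Printing Implicit Defensive.

Section Leaves.
Variable X : Type.

Lemma in_plug (c : ctx X) (a : formula X) q : List.In q (leaves a) -> List.In q (leaves (plug c a)).
Proof.
elim: c => //= [c IH r|r c IH|c IH r|r c IH] H; apply: List.in_or_app; by [left; apply: IH|right; apply: IH].
Qed.

Lemma ctx_split (c : ctx X) (b : formula X) q : List.In q (leaves (plug c b)) ->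
  List.In q (leaves b) \/ (forall a, List.In q (leaves (plug c a))).
Proof.
elim: c => /= [|c IH r|r c IH|c IH r|r c IH]; first by left.
- move=> H0; case: (List.in_app_or _ _ _ H0) => [/IH [H|H]|H]; try (by left); right => a;
  apply: List.in_or_app; by [left|right].
- move=> H0; case: (List.in_app_or _ _ _ H0) => [H|/IH [H|H]]; try (by left); right => a;
  apply: List.in_or_app; by [left|right].
- move=> H0; case: (List.in_app_or _ _ _ H0) => [/IH [H|H]|H]; try (by left); right => a;
  apply: List.in_or_app; by [left|right].
- move=> H0; case: (List.in_app_or _ _ _ H0) => [H|/IH [H|H]]; try (by left); right => a;
  apply: List.in_or_app; by [left|right].
Qed.

Lemma eqn_leaves (a b : formula X) q : Defs.eqn a b -> (List.In q (leaves b) <-> List.In q (leaves a)).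
Proof.
case=> /= [a' b'|a' b'|a' b' c'|a' b' c'|a'|a'||]; rewrite ?cats0 ?app_nil_r //.
- rewrite !List.in_app_iff; tauto.
- rewrite !List.in_app_iff; tauto.
- by rewrite catA.
- by rewrite catA.
Qed.

Lemma srule_leaves (a b : formula X) q : srule a b -> List.In q (leaves b) -> List.In q (leaves a).
Proof.
case=> /= [a' b' c'|a' b' c' d'|a' b' E|a' b' E].
- rewrite !List.in_app_iff; tauto.
- rewrite !List.in_app_iff; tauto.
- by move/(eqn_leaves _ _ _ E).
- by move/(eqn_leaves _ _ _ E).
Qed.

End Leaves.

Lemma lstep_inv A (bar : A -> A) i (p q : lformula A) o : lstep bar i p q o ->
  exists c a b, p = plug c a /\ q = plug c b /\
   ((o = None /\ srule a b) \/ exists lb ups, o = Some (lb, ups) /\ arule bar i a b lb ups).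
Proof.
case=> [c a b S|c a b lb ups R]; exists c, a, b; do 2 split=> //; [left|right] => //.
by exists lb, ups.
Qed.

Lemma In_map {X Y : Type} (f : X -> Y) s x : List.In x s -> List.In (f x) (map f s).
Proof. elim: s => //= y s IH [->|H]; [left|right; apply: IH] => //. Qed.

Lemma In_map_inv {X Y : Type} (f : X -> Y) s y : List.In y (map f s) -> exists x, List.In x s /\ f x = y.
Proof.
elim: s => //= x s IH [<-|/IH [z [H1 H2]]]; [exists x; by split; [left|]|exists z; by split; [right|]].
Qed.

Lemma arule_rhs A (bar : A -> A) j a b lb ups q : arule bar j a b lb ups -> List.In q (leaves b) -> q.2.1 = j.+1.
Proof.
case=> /= [a'|a'|a' e1 e2|a' e1 e2|a' e|a' e] H //.
- case: H => [<-|[<-|[]]] //.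
- case: H => [<-|[]] //.
- case: H => [<-|[]] //.
- case: H => [<-|[<-|[]]] //.
Qed.

Lemma arule_lhs A (bar : A -> A) j a b lb ups e : arule bar j a b lb ups -> e \in ups ->
  exists a', List.In (a', e) (leaves a).
Proof.
case=> /= [a'|a'|a' e1 e2|a' e1 e2|a' e'|a' e']; rewrite ?inE //.
- case/orP=> /eqP ->; [exists a'; by left|exists a'; right; by left].
- case/orP=> /eqP ->; [exists a'; by left|exists (bar a'); right; by left].
- move=> /eqP ->; exists a'; by left.
- move=> /eqP ->; exists a'; by left.
Qed.

Section AR.
Variables (A : Type) (bar : A -> A).
Hypothesis bar_inv : forall a, bar (bar a) = a.
Hypothesis bar_neq : forall a, bar a <> a.

Ltac crush := repeat match goal with
 | H : _ \/ _ |- _ => destruct H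
 | H : False |- _ => destruct H
 | H : is_true (_ || _) |- _ => case/orP: H => H
 | H : is_true (_ \in [::]) |- _ => by rewrite in_nil in H
 | H : is_true (_ == _) |- _ => move/eqP: H => H
 | H : (_, _) = (_, _) |- _ => injection H; clear H; intros; subst
 end; try done;
 try match goal with
 | H : ?z = bar ?z |- _ => by case: (bar_neq z)
 | H : bar ?z = ?z |- _ => by case: (bar_neq z)
 end.

Lemma AR1 i a b lb ups e f x y : arule bar i a b lb ups -> e \in ups ->
  List.In (x, e) (leaves a) -> List.In (y, f) (leaves b) -> x = y.
Proof. case=> /= [a'|a'|a' e1 e2|a' e1 e2|a' e'|a' e'] => H1 H2 H3; rewrite ?inE in H1; crush. Qed.

Lemma AR2 i a b lb ups e f x : arule bar i a b lb ups ->
  List.In (x, e) (leaves b) -> List.In (bar x, f) (leaves b) -> lb = VInt /\ ups = [::].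
Proof. case=> /= [a'|a'|a' e1 e2|a' e1 e2|a' e'|a' e'] => H2 H3; crush. Qed.

Lemma AR3 i a b lb ups e f x : arule bar i a b lb ups -> e \in ups -> f \in ups ->
  List.In (x, e) (leaves a) -> List.In (bar x, f) (leaves a) -> lb = VCut.
Proof. case=> /= [a'|a'|a' e1 e2|a' e1 e2|a' e'|a' e'] => H0 H1 H2 H3; rewrite ?inE in H0 H1; crush. Qed.

Lemma AR4 i a b ups e f x y : arule bar i a b VInt ups ->
  List.In (x, e) (leaves b) -> List.In (y, f) (leaves b) -> e <> f -> y = bar x.
Proof.
move Hl: VInt => lb R. case: R Hl => /= [a'|a'|a' e1 e2|a' e1 e2|a' e'|a' e'] //= _ H1 H2 H3; crush;
by rewrite bar_inv.
Qed.

Lemma AR5 i a b ups e f x y : arule bar i a b VCut ups ->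
  List.In (x, e) (leaves a) -> List.In (y, f) (leaves a) -> e <> f -> y = bar x.
Proof.
move Hl: VCut => lb R. case: R Hl => /= [a'|a'|a' e1 e2|a' e1 e2|a' e'|a' e'] //= _ H1 H2 H3; crush;
by rewrite bar_inv.
Qed.

Lemma ARU i a b lb ups e x y : arule bar i a b lb ups ->
  List.In (x, e) (leaves b) -> List.In (y, e) (leaves b) -> x = y.
Proof. case=> /= [a'|a'|a' e1 e2|a' e1 e2|a' e'|a' e'] => H2 H3; crush. Qed.

Lemma AR6 i a b ups : arule bar i a b VInt ups -> ups = [::].
Proof. move Hl: VInt => lb R. by case: R Hl. Qed.

Lemma AR7 i a b ups q : arule bar i a b VCut ups -> ~ List.In q (leaves b).
Proof. move Hl: VCut => lb R. case: R Hl => //= *; tauto. Qed.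

End AR.

Lemma uniq_pairs {X : Type} (s : seq (X * edge)) x y e : uniq (map snd s) ->
  List.In (x, e) s -> List.In (y, e) s -> x = y.
Proof.
elim: s => //= q s IH /andP [Hn Hu] [Hx|Hx] [Hy|Hy].
- by rewrite Hx in Hy; case: Hy.
- exfalso. move/negP: Hn; apply. rewrite Hx /=. elim: s Hy {IH Hu} => //= r s IH' [->|H].
    by rewrite inE eqxx.
  by rewrite inE IH' ?orbT.
- exfalso. move/negP: Hn; apply. rewrite Hy /=. elim: s Hx {IH Hu} => //= r s IH' [->|H].
    by rewrite inE eqxx.
  by rewrite inE IH' ?orbT.
- exact: IH.
Qed.

Lemma mem_flatten_map {X : Type} (g : X -> seq edge) (s : seq X) e d :
  e \in flatten [seq g p | p <- s] -> exists j, j < size s /\ e \in g (nth d s j).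
Proof.
elim: s => //= p s IH. rewrite mem_cat => /orP [H|/IH [j [H1 H2]]].
- by exists 0.
- by exists j.+1.
Qed.

Lemma mem_map_inv {X : Type} (f : X -> edge) s e : e \in map f s -> exists x, List.In x s /\ f x = e.
Proof.
elim: s => //= x s IH. rewrite inE => /orP [/eqP ->|/IH [z [H1 H2]]].
- exists x; by split; [left|].
- exists z; by split; [right|].
Qed.

Lemma head_rev' {X : Type} (x0 : X) s : head x0 (rev s) = last x0 s.
Proof. elim/last_ind: s => //= t z _. by rewrite rev_rcons last_rcons. Qed.
Lemma last_rev' {X : Type} (x0 : X) s : last x0 (rev s) = head x0 s.
Proof. case: s => //= y t. by rewrite rev_cons last_rcons. Qed.
Lemma last_ne {X : Type} (a b : X) s : 0 < size s -> last a s = last b s.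
Proof. by case: s. Qed.

Section Flow.
Variables (A : Type) (bar : A -> A) (Dv : derivation A) (TT : nat).
Hypothesis bar_inv : forall a, bar (bar a) = a.
Hypothesis bar_neq : forall a, bar a <> a.
Local Notation F j := (nth FF (dforms Dv) j).
Local Notation L := (dinfo Dv).
Hypothesis Hsz : size (dforms Dv) = (size L).+1.
Hypothesis Hpre : map snd (leaves (F 0)) = [seq (0, k) | k <- iota 0 (size (leaves (F 0)))].
Hypothesis Hst : forall i, i < size L -> lstep bar i (F i) (F i.+1) (nth None L i).
Hypothesis Hcut : forall j ups, nth None L j = Some (VCut, ups) -> j < TT.
Hypothesis Hint : forall j, nth None L j = Some (VInt, [::]) -> TT <= j.

Lemma L_inv j : j <= size L -> forall q, List.In q (leaves (F j)) -> q.2.1 <= j /\ List.In q (leaves (F q.2.1)).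
Proof.
elim: j => [_ q Hq|j IH Hj q Hq].
- have := In_map snd _ _ Hq. rewrite Hpre => H. have [k [_ Hk]] := In_map_inv _ _ _ H.
  by rewrite -Hk.
- have [c [a [b [E1 [E2 [[_ S]|[lb [ups [_ R]]]]]]]]] := lstep_inv _ _ _ _ _ _ (Hst j Hj).
  + have Hq' := Hq. rewrite E2 in Hq'. have Hfj : List.In q (leaves (F j)).
      rewrite E1. case: (ctx_split _ _ _ _ Hq') => [Hb|Hc]; last exact: Hc.
      apply: in_plug. exact: srule_leaves S Hb.
    have [H1 H2] := IH (ltnW Hj) q Hfj. split=> //. exact: leqW.
  + have Hq' := Hq. rewrite E2 in Hq'. case: (ctx_split _ _ _ _ Hq') => [Hb|Hc].
    * have E := arule_rhs _ _ _ _ _ _ _ _ R Hb. by rewrite E.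
    * have Hfj : List.In q (leaves (F j)) by rewrite E1; exact: Hc.
      have [H1 H2] := IH (ltnW Hj) q Hfj. split=> //. exact: leqW.
Qed.


Lemma step_dec n : n < size L -> exists c a b, F n = plug c a /\ F n.+1 = plug c b /\
  ((nth None L n = None /\ srule a b) \/ exists lb ups, nth None L n = Some (lb, ups) /\ arule bar n a b lb ups).
Proof. move=> Hn. exact: lstep_inv (Hst n Hn). Qed.

Lemma born_in_b n c a b q : n < size L -> F n = plug c a -> F n.+1 = plug c b ->
  List.In q (leaves (F n.+1)) -> q.2.1 = n.+1 -> List.In q (leaves b).
Proof.
move=> Hn E1 E2 Hq Hq1. rewrite E2 in Hq. case: (ctx_split _ _ _ _ Hq) => [//|Hc].
have Hf : List.In q (leaves (F n)) by rewrite E1; exact: Hc.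
have [H _] := L_inv n (ltnW Hn) q Hf. by rewrite Hq1 ltnn in H.
Qed.

Lemma born_step q n : n < size L -> List.In q (leaves (F n.+1)) -> q.2.1 = n.+1 ->
  exists lb ups c a b, nth None L n = Some (lb, ups) /\ F n = plug c a /\ F n.+1 = plug c b /\
    arule bar n a b lb ups /\ List.In q (leaves b).
Proof.
move=> Hn Hq Hq1. have [c [a [b [E1 [E2 [[_ S]|[lb [ups [Hl R]]]]]]]]] := step_dec n Hn.
- exfalso. have Hb := born_in_b n c a b q Hn E1 E2 Hq Hq1.
  have Hf : List.In q (leaves (F n)) by rewrite E1; apply: in_plug; exact: srule_leaves S Hb.
  have [H _] := L_inv n (ltnW Hn) q Hf. by rewrite Hq1 ltnn in H.
- exists lb, ups, c, a, b. have Hb := born_in_b n c a b q Hn E1 E2 Hq Hq1. by repeat split.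
Qed.

Definition has_atom e x := exists j, j <= size L /\ List.In (x, e) (leaves (F j)).

Lemma ha_born e x : has_atom e x -> e.1 <= size L /\ List.In (x, e) (leaves (F e.1)).
Proof.
move=> [j [Hj Hx]]. have [H1 H2] := L_inv j Hj _ Hx. split=> //. exact: leq_trans Hj.
Qed.

Lemma atom_uniq e x y : has_atom e x -> has_atom e y -> x = y.
Proof.
move=> /ha_born [He Hx] /ha_born [_ Hy].
move: He Hx Hy. case E: e.1 => [|n] He Hx Hy.
- apply: (uniq_pairs (leaves (F 0))) Hx Hy. rewrite Hpre map_inj_uniq ?iota_uniq //.
  by move=> k k' [].
- have [lb [ups [c [a [b [_ [E1 [E2 [R Hbx]]]]]]]]] := born_step (x, e) n He Hx E.
  have Hby := born_in_b n c a b (y, e) He E1 E2 Hy E.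
  exact: ARU R Hbx Hby.
Qed.

Lemma edge_atom e : e \in edges Dv -> exists x, has_atom e x.
Proof.
rewrite /edges => /(mem_flatten_map _ _ _ FF) [j [Hj He]].
have [q [Hq Hqe]] := mem_map_inv _ _ _ He.
exists q.1, j. split; first by rewrite -ltnS -Hsz.
by rewrite -Hqe -surjective_pairing.
Qed.

Lemma lo_edge e n : lo Dv e = NV n -> n < size L /\ exists lb ups, nth None L n = Some (lb, ups) /\ e \in ups.
Proof.
rewrite /lo. case: ifP => // H [<-]. split=> //.
have := @nth_find _ None (consumes e) (dinfo Dv). rewrite has_find => /(_ H).
rewrite /consumes. case: nth => [[lb ups]|] // He. by exists lb, ups.
Qed.

Lemma consumed_in e n lb ups : n < size L -> nth None L n = Some (lb, ups) -> e \in ups ->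
  exists c a b x, F n = plug c a /\ F n.+1 = plug c b /\ arule bar n a b lb ups /\
    List.In (x, e) (leaves a) /\ has_atom e x /\ e.1 <= n.
Proof.
move=> Hn Hl He. have [c [a [b [E1 [E2 [[H _]|[lb' [ups' [Hl' R]]]]]]]]] := step_dec n Hn.
- by rewrite Hl in H.
- rewrite Hl in Hl'. case: Hl' => <- <- in R. have [x Hx] := arule_lhs _ _ _ _ _ _ _ _ R He.
  have Hf : List.In (x, e) (leaves (F n)) by rewrite E1; exact: in_plug.
  have Hha : has_atom e x by exists n; split=> //; exact: ltnW.
  have [H1 _] := L_inv n (ltnW Hn) _ Hf.
  exists c, a, b, x. by repeat split.
Qed.

Definition tm (v : node) : nat := match v with NTop => 0 | NV j => j.+1 | NBot => (size L).+1 end.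

Lemma tm_up e : tm (up e) = e.1.
Proof. by rewrite /up; case: e.1. Qed.

Lemma up_born e n : up e = NV n -> e.1 = n.+1.
Proof. by rewrite /up; case: e.1 => // m [->]. Qed.

Lemma tm_edge e : e \in edges Dv -> tm (up e) < tm (lo Dv e).
Proof.
move=> He. rewrite tm_up. have [x /ha_born [Hs _]] := edge_atom e He.
case Elo: (lo Dv e) => [||n] /=.
- move: Elo; rewrite /lo; by case: ifP.
- by rewrite ltnS.
- have [Hn [lb [ups [Hl Hu]]]] := lo_edge e n Elo.
  have [c [a [b [x' [_ [_ [_ [_ [_ H]]]]]]]]] := consumed_in e n lb ups Hn Hl Hu.
  by rewrite ltnS.
Qed.

Lemma VF1 e f n x y : lo Dv e = NV n -> up f = NV n -> has_atom e x -> has_atom f y -> x = y.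
Proof.
move=> Hlo Hup Hx Hy. have [Hn [lb [ups [Hl He]]]] := lo_edge e n Hlo.
have [c [a [b [x' [E1 [E2 [R [Hxa [Hhx _]]]]]]]]] := consumed_in e n lb ups Hn Hl He.
rewrite (atom_uniq _ _ _ Hx Hhx). have Hf1 := up_born f n Hup.
have [_ Hyf] := ha_born f y Hy. rewrite Hf1 in Hyf.
have Hyb := born_in_b n c a b (y, f) Hn E1 E2 Hyf Hf1.
exact: AR1 R He Hxa Hyb.
Qed.

Lemma VF2 f g n x : lo Dv f = NV n -> lo Dv g = NV n -> has_atom f x -> has_atom g (bar x) ->
  exists ups, nth None L n = Some (VCut, ups).
Proof.
move=> Hf Hg Hx Hy. have [Hn [lb [ups [Hl Hfu]]]] := lo_edge f n Hf.
have [_ [lb' [ups' [Hl' Hgu]]]] := lo_edge g n Hg. rewrite Hl in Hl'. case: Hl' => ? ?; subst lb' ups'.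
have [c [a [b [x' [E1 [E2 [R [Hxa [Hhx _]]]]]]]]] := consumed_in f n lb ups Hn Hl Hfu.
have [y' Hya] := arule_lhs _ _ _ _ _ _ _ _ R Hgu.
have Hhy : has_atom g y' by exists n; split; [exact: ltnW|rewrite E1; exact: in_plug].
rewrite -(atom_uniq _ _ _ Hx Hhx) in Hxa. rewrite -(atom_uniq _ _ _ Hy Hhy) in Hya.
exists ups. by rewrite Hl (AR3 _ _ bar_neq _ _ _ _ _ _ _ _ R Hfu Hgu Hxa Hya).
Qed.

Lemma VF3 f g n x : up f = NV n -> up g = NV n -> has_atom f x -> has_atom g (bar x) ->
  nth None L n = Some (VInt, [::]).
Proof.
move=> Hf Hg Hx Hy. have Hf1 := up_born f n Hf. have Hg1 := up_born g n Hg.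
have [Hs Hxf] := ha_born f x Hx. have [_ Hyg] := ha_born g _ Hy. rewrite Hf1 in Hs Hxf. rewrite Hg1 in Hyg.
have [lb [ups [c [a [b [Hl [E1 [E2 [R Hb]]]]]]]]] := born_step (x, f) n Hs Hxf Hf1.
have Hb' := born_in_b n c a b (bar x, g) Hs E1 E2 Hyg Hg1.
have [E3 E4] := AR2 _ _ bar_neq _ _ _ _ _ _ _ _ R Hb Hb'. by rewrite Hl E3 E4.
Qed.

Lemma VF4a e n : nth None L n = Some (VInt, [::]) -> lo Dv e = NV n -> False.
Proof. move=> Hl Hlo. have [_ [lb [ups [Hl' He]]]] := lo_edge e n Hlo. rewrite Hl in Hl'. by case: Hl' => _ <- in He. Qed.

Lemma VF4b e n ups : nth None L n = Some (VCut, ups) -> up e = NV n -> e \in edges Dv -> False.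
Proof.
move=> Hl Hup He. have [x Hx] := edge_atom e He. have He1 := up_born e n Hup.
have [Hs Hxe] := ha_born e x Hx. rewrite He1 in Hs Hxe.
have [lb [ups' [c [a [b [Hl' [E1 [E2 [R Hb]]]]]]]]] := born_step (x, e) n Hs Hxe He1.
rewrite Hl in Hl'. case: Hl' => ? ?; subst lb ups'. exact: AR7 R Hb.
Qed.

Lemma VF5 e1 e2 n ups x y : nth None L n = Some (VInt, ups) -> up e1 = NV n -> up e2 = NV n ->
  e1 <> e2 -> has_atom e1 x -> has_atom e2 y -> y = bar x.
Proof.
move=> Hl H1 H2 Hne Hx Hy. have E1' := up_born e1 n H1. have E2' := up_born e2 n H2.
have [Hs Hxe] := ha_born e1 x Hx. have [_ Hye] := ha_born e2 y Hy. rewrite E1' in Hs Hxe. rewrite E2' in Hye.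
have [lb [ups' [c [a [b [Hl' [E1 [E2 [R Hb]]]]]]]]] := born_step (x, e1) n Hs Hxe E1'.
have Hb' := born_in_b n c a b (y, e2) Hs E1 E2 Hye E2'.
rewrite Hl in Hl'. case: Hl' => ? ?; subst lb ups'. exact: AR4 _ _ bar_inv _ _ _ _ _ _ _ _ R Hb Hb' Hne.
Qed.

Lemma VF6 e1 e2 n ups x y : nth None L n = Some (VCut, ups) -> lo Dv e1 = NV n -> lo Dv e2 = NV n ->
  e1 <> e2 -> has_atom e1 x -> has_atom e2 y -> y = bar x.
Proof.
move=> Hl H1 H2 Hne Hx Hy. have [Hn [lb [ups' [Hl' He1]]]] := lo_edge e1 n H1.
have [_ [lb'' [ups'' [Hl'' He2]]]] := lo_edge e2 n H2.
rewrite Hl in Hl'. case: Hl' => ? ?; subst lb ups'. rewrite Hl in Hl''. case: Hl'' => ? ?; subst lb'' ups''.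
have [c [a [b [x' [E1 [E2 [R [Hxa [Hhx _]]]]]]]]] := consumed_in e1 n VCut ups Hn Hl He1.
have [y' Hya] := arule_lhs _ _ _ _ _ _ _ _ R He2.
have Hhy : has_atom e2 y' by exists n; split; [exact: ltnW|rewrite E1; exact: in_plug].
rewrite (atom_uniq _ _ _ Hx Hhx) (atom_uniq _ _ _ Hy Hhy).
exact: AR5 _ _ bar_inv _ _ _ _ _ _ _ _ R Hxa Hya Hne.
Qed.

Lemma dpath_inv v s v' : dpath Dv v s v' -> exists x,
  [/\ 0 < size s, head (0,0) s \in edges Dv, last (0,0) s \in edges Dv,
      up (head (0,0) s) = v & lo Dv (last (0,0) s) = v'] /\
  has_atom (head (0,0) s) x /\ has_atom (last (0,0) s) x /\ tm v < tm v'.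
Proof.
elim=> {v s v'} [e He|e s v' He Hd [x [[Hs Hh Hl Hup Hlo] [Hax [Hbx Htm]]]]].
- have [x Hx] := edge_atom e He. exists x. split; first by split. split; first done. split; first done. exact: tm_edge.
- have [y Hy] := edge_atom e He. exists y. rewrite /= (last_ne e (0,0) s Hs).
  have Exy : y = x.
    case Elo: (lo Dv e) Hup => [||n] Hup.
    + move: Elo; rewrite /lo; by case: ifP.
    + by move: Hup; rewrite /up; case: (head (0,0) s).1.
    + exact: VF1 e _ n y x Elo Hup Hy Hax.
  subst y. split; first by split. split; first done. split; first done. exact: ltn_trans (tm_edge e He) Htm.
Qed.

Definition INV v s v' := exists (d0 d1 : bool) x,
  [/\ 0 < size s, head (0,0) s \in edges Dv & last (0,0) s \in edges Dv] /\
  (if d0 then up (head (0,0) s) = v else lo Dv (head (0,0) s) = v) /\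
  (if d1 then lo Dv (last (0,0) s) = v' else up (last (0,0) s) = v') /\
  has_atom (head (0,0) s) x /\ has_atom (last (0,0) s) (if d0 == d1 then x else bar x) /\
  (if d0 then (if d1 then is_true (tm v < tm v') else tm v < TT /\ tm v' < TT)
   else (if d1 then TT.+1 < tm v /\ TT.+1 < tm v' else is_true (tm v' < tm v))).

Lemma aipath_inv v s v' : aipath Dv v s v' -> INV v s v'.
Proof.
elim=> {v s v'} [v s v' Hd|v s v' Hd|v s1 e1 w e2 s2 v' H1 IH1 H2 IH2 Hw Hne].
- have [x [[Hs Hh Hl Hup Hlo] [Hax [Hbx Htm]]]] := dpath_inv v s v' Hd.
  exists true, true, x. by repeat split.
- have [x [[Hs Hh Hl Hup Hlo] [Hax [Hbx Htm]]]] := dpath_inv v' s v Hd.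
  exists false, false, x. rewrite head_rev' last_rev' size_rev. by repeat split.
- have [d0 [d1 [x [[Hs1 Hh1 Hl1] [Hv1 [Hw1 [Ha1 [Hb1 Ht1]]]]]]]] := IH1.
  have [d0' [d1' [x' [[Hs2 Hh2 Hl2] [Hv2 [Hw2 [Ha2 [Hb2 Ht2]]]]]]]] := IH2.
  rewrite last_rcons in Hl1 Hw1 Hb1. rewrite /= in Hh2 Hv2 Ha2.
  have Eh : head (0,0) (rcons s1 e1 ++ e2 :: s2) = head (0,0) (rcons s1 e1) by case: s1 {H1 IH1 Hs1 Hh1 Hv1 Ha1 Hw1 Hb1 Hl1}.
  have El : last (0,0) (rcons s1 e1 ++ e2 :: s2) = last (0,0) (e2 :: s2) by rewrite last_cat.
  have Es : 0 < size (rcons s1 e1 ++ e2 :: s2) by rewrite size_cat addnS.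
  case: w Hw H1 IH1 H2 IH2 Hv1 Hw1 Ht1 Hv2 Hw2 Ht2 => [||n] Hw H1 IH1 H2 IH2 Hv1 Hw1 Ht1 Hv2 Hw2 Ht2;
    [by case: Hw|by case: Hw|].
  case: Hw => [Hi|[ups Hc]].
  +
    have HT := Hint n Hi.
    case: d1 Hw1 Hb1 Ht1 => Hw1 Hb1 Ht1; first by case: (VF4a e1 n Hi Hw1).
    case: d0' Hv2 Ha2 Hb2 Ht2 => Hv2 Ha2 Hb2 Ht2; last by case: (VF4a e2 n Hi Hv2).
    have Ex' : x' = bar (if d0 == false then x else bar x).
      exact: VF5 e1 e2 n [::] _ _ Hi Hw1 Hv2 Hne Hb1 Ha2.
    case: d0 Hv1 Ha1 Hb1 Ht1 Ex' => Hv1 Ha1 Hb1 Ht1 Ex' /=.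
      by exfalso; case: Ht1 => /= *; lia.
    case: d1' Hw2 Hb2 Ht2 => Hw2 Hb2 Ht2 /=; last by exfalso; case: Ht2 => /= *; lia.
    exists false, true, x. rewrite Eh El Es. split; first by split.
    rewrite /= in Ex'. subst x'. do 4 (split => //). rewrite /= in Ht1 Ht2. split; lia.
  +
    have HT := Hcut n ups Hc.
    case: d1 Hw1 Hb1 Ht1 => Hw1 Hb1 Ht1; last by case: (VF4b e1 n ups Hc Hw1 Hl1).
    case: d0' Hv2 Ha2 Hb2 Ht2 => Hv2 Ha2 Hb2 Ht2; first by case: (VF4b e2 n ups Hc Hv2 Hh2).
    have Ex' : x' = bar (if d0 == true then x else bar x).
      exact: VF6 e1 e2 n ups _ _ Hc Hw1 Hv2 Hne Hb1 Ha2.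
    case: d0 Hv1 Ha1 Hb1 Ht1 Ex' => Hv1 Ha1 Hb1 Ht1 Ex' /=; last by exfalso; case: Ht1 => /= *; lia.
    case: d1' Hw2 Hb2 Ht2 => Hw2 Hb2 Ht2 /=; first by exfalso; case: Ht2 => /= *; lia.
    exists true, false, x. rewrite Eh El Es. split; first by split.
    rewrite /= in Ex'. subst x'. do 4 (split => //). rewrite /= in Ht1 Ht2. split; lia.
Qed.

Lemma cycle_free_phase : cycle_free Dv.
Proof.
move=> s [n [Hp _]]. have [d0 [d1 [x [[Hs Hh Hl] [Hv [Hw [Ha [Hb Ht]]]]]]]] := aipath_inv _ _ _ Hp.
case: d0 d1 Hv Hw Hb Ht => [] [] Hv Hw Hb Ht /=.
- move: Ht => /=; lia.
- have Hi := VF3 _ _ n x Hv Hw Ha Hb. have := Hint n Hi. case: Ht => /= *; lia.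
- have [ups Hc] := VF2 _ _ n x Hv Hw Ha Hb. have := Hcut n ups Hc. case: Ht => /= *; lia.
- move: Ht => /=; lia.
Qed.

End Flow.

Unset Implicit Arguments. Unset Printing Implicit Defensive.

Section Final.
Variables (A : Type) (bar : A -> A).

Fixpoint labf (k : nat) (x : formula A) : lformula A * nat :=
  match x with
  | FF => (FF, k) | FT => (FT, k) | FAt a => (FAt (a, (0, k)), k.+1)
  | FOr x y => let r1 := labf k x in let r2 := labf r1.2 y in (FOr r1.1 r2.1, r2.2)
  | FAnd x y => let r1 := labf k x in let r2 := labf r1.2 y in (FAnd r1.1 r2.1, r2.2)
  end.

Lemma labf_spec x : forall k, [/\ erase (labf k x).1 = x, (labf k x).2 = k + size (leaves x) &
  map snd (leaves (labf k x).1) = [seq (0, j) | j <- iota k (size (leaves x))]].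
Proof.
elim: x => [|||x IHx y IHy|x IHx y IHy] k /=.
- by rewrite addn0.
- by rewrite addn0.
- move=> a. by rewrite addn1.
- have [E1 S1 M1] := IHx k. have [E2 S2 M2] := IHy (labf k x).2.
  split.
  + by rewrite eraseO E1 E2.
  + by rewrite S2 S1 size_cat addnA.
  + by rewrite map_cat M1 M2 S1 size_cat iotaD map_cat.
- have [E1 S1 M1] := IHx k. have [E2 S2 M2] := IHy (labf k x).2.
  split.
  + by rewrite eraseA E1 E2.
  + by rewrite S2 S1 size_cat addnA.
  + by rewrite map_cat M1 M2 S1 size_cat iotaD map_cat.
Qed.

Lemma DV_props i p r fs l : DV bar i p r fs l ->
  [/\ size fs = (size l).+1, head FF fs = p, last FF fs = r &
     forall k, k < size l -> lstep bar (i + k) (nth FF fs k) (nth FF fs k.+1) (nth None l k)].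
Proof.
elim=> {i p r fs l} [i p|i p q r fs l o S H [IH1 IH2 IH3 IH4]].
- by split.
- split=> //=.
  + by rewrite IH1.
  + by rewrite (last_ne p FF fs) ?IH1.
  + case=> [|k] Hk /=.
    * by rewrite addn0 nth0 IH2.
    * rewrite addnS -addSn. exact: IH4.
Qed.

Lemma all_nth' (p : info -> bool) s k : all p s -> k < size s -> p (nth None s k).
Proof. elim: s k => //= o s IH [|k] /andP [H1 H2] //= Hk. exact: IH. Qed.

End Final.

Lemma aipath_edge A (Dv : derivation A) v s v' : aipath Dv v s v' -> exists e, e \in edges Dv.
Proof.
elim=> // [v0 s0 v0' [e He|e s1 w He _]|v0 s0 v0' [e He|e s1 w He _]]; by exists e.
Qed.

Theorem theorem5p17 (A : Type) (bar : A -> A)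
    (bar_inv : forall a, bar (bar a) = a) (bar_neq : forall a, bar a <> a)
    (D : derivation A) (x y : formula A) :
  is_derivation bar D x y ->
  exists D' : derivation A, is_derivation bar D' x y /\ cycle_free D'.
Proof.
move=> HD. case: (classic (inhabited A)) => [[a0]|NA].
- have Hsem := deriv_sound A bar D x y HD.
  have [z [[D1] [D2]]] := complete A bar bar_inv bar_neq a0 x y Hsem.
  pose p0 := (labf A 0 x).1. have [Ep0 _ Mp0] := labf_spec A x 0.
  have [q [fs1 [l1 [DV1 [Eq O1]]]]] := D1 0 p0 Ep0.
  have [r [fs2 [l2 [DV2 [Er O2]]]]] := D2 (0 + size l1) q Eq.
  have DVc := DV_app DV1 DV2.
  have [Hsz Hhd Hlt Hst] := DV_props A bar _ _ _ _ _ DVc.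
  have Hpre : map snd (leaves (nth FF (fs1 ++ behead fs2) 0)) =
      [seq (0, k) | k <- iota 0 (size (leaves (nth FF (fs1 ++ behead fs2) 0)))].
    rewrite nth0 Hhd Mp0. congr (map _ (iota 0 _)).
    by rewrite -(size_map snd (leaves p0)) Mp0 size_map size_iota.
  exists (Deriv (fs1 ++ behead fs2) (l1 ++ l2)). split.
  + split=> //=. split; first by rewrite -nth0.
    split; first exact: Hst.
    by rewrite Hhd Hlt.
  + apply: (cycle_free_phase A bar _ (size l1) bar_inv bar_neq) => //=.
    * move=> j ups. rewrite nth_cat. case: ifP => // Hj Hn. exfalso.
      have Hk : j - size l1 < size l2.
        case: (ltnP (j - size l1) (size l2)) => // Hge. by rewrite nth_default in Hn.
      have := all_nth' (okinfo okNC) l2 _ O2 Hk. by rewrite Hn.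
    * move=> j. rewrite nth_cat. case: ifP => // Hj Hn.
      have := all_nth' (okinfo okNI) l1 _ O1 Hj. by rewrite Hn.
      by rewrite leqNgt Hj.
- exists D. split=> // s [n [Hp _]]. have [e He] := aipath_edge _ _ _ _ _ Hp.
  have [j [_ He']] := mem_flatten_map _ _ e FF He.
  have [q [Hq _]] := mem_map_inv _ _ _ He'. apply: NA. exact: inhabits q.1.
Qed.
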